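(* Let $r \ge 3$ and $n \ge \frac{1}{3} r^4$. Let $\mathcal{H}$ be an intersecting $r$-uniform $n$-vertex hypergraph with $\delta_{r-1}^+(\mathcal{H}) \ge 2$ having the maximum number of hyperedges among all intersecting $r$-uniform $n$-vertex hypergraphs with minimum positive co-degree at least $2$. Then $\mathcal{H}$ is a $2$-kernel system.
   Context: A hypergraph is intersecting if every two of its hyperedges share at least one vertex. For a non-empty $r$-uniform hypergraph $\mathcal{H}$, the minimum positive co-degree $\delta_{r-1}^+(\mathcal{H})$ is the largest integer $k$ such that every $(r-1)$-set of vertices that is contained in at least one hyperedge of $\mathcal{H}$ is contained in at least $k$ distinct hyperedges of $\mathcal{H}$; for the empty hypergraph it is $0$. Given integers $r \ge k \ge 1$, an $r$-uniform $k$-kernel system on vertex set $V$ is a hypergraph whose hyperedge set is $\{E \in \binom{V}{r} : |E \cap X| \ge k\}$ for some set $X \subseteq V$ with $|X| = 2k-1$. *)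

(* Defs.v *)
From mathcomp Require Import all_boot.
Set Implicit Arguments. Unset Strict Implicit. Unset Printing Implicit Defensive.

Section Hyper.
Variable n : nat.
Notation hgraph := {set {set 'I_n}}.

Definition uniform (r : nat) (H : hgraph) : bool :=
  [forall E in H, #|E| == r].

Definition intersecting (H : hgraph) : bool :=
  [forall E in H, forall F in H, E :&: F != set0].

Definition codeg (H : hgraph) (S : {set 'I_n}) : nat :=
  #|[set E in H | S \subset E]|.

(* minimum positive (r-1)-co-degree: for nonempty H, the minimum of codeg over
   the (r-1)-sets contained in at least one hyperedge (equivalently the largest
   k such that every such set lies in >= k hyperedges); 0 for the empty
   hypergraph.  #|H| is a harmless default for the min (every codeg <= #|H|). *)
Definition min_pos_codeg (r : nat) (H : hgraph) : nat :=
  if H == set0 then 0 else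
  \big[minn/#|H|]_(S : {set 'I_n} | (#|S| == r.-1) && [exists E in H, S \subset E])
     codeg H S.

Definition kernel_system (r k : nat) (H : hgraph) : Prop :=
  exists X : {set 'I_n}, #|X| = (2 * k).-1 /\
    H = [set E : {set 'I_n} | (#|E| == r) && (k <= #|E :&: X|)].
End Hyper.

(* Main.v *)
Require Import Defs.
From mathcomp Require Import all_boot.
From mathcomp Require Import zify.
Set Implicit Arguments. Unset Strict Implicit. Unset Printing Implicit Defensive.

Lemma count_sup (n : nat) (t u : {set 'I_n}) k : [disjoint t & u] ->
  #|[set E : {set 'I_n} | (#|E| == #|t| + k) && (t \subset E) && [disjoint E & u]]|
  = 'C(n - #|t| - #|u|, k).
Proof.
move=> dtu.
set D := ~: (t :|: u).
have cD : #|D| = n - #|t| - #|u|.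
  rewrite cardsCs setCK card_ord cardsU.
  move: dtu; rewrite -setI_eq0 => /eqP ->; rewrite cards0 subn0; lia.
rewrite -cD -cards_draws.
have -> : [set E : {set 'I_n} | (#|E| == #|t| + k) && (t \subset E) && [disjoint E & u]]
   = (fun B => B :|: t) @: [set B : {set 'I_n} | B \subset D & #|B| == k].
  apply/setP => E; rewrite inE; apply/idP/imsetP.
  - case/andP => /andP [/eqP cE tE] dEu.
    exists (E :\: t).
      rewrite inE; apply/andP; split.
        apply/subsetP => x; rewrite !inE => /andP [xt xE]; rewrite negb_or xt /=.
        apply/negP => xu. move: dEu; rewrite disjoints_subset => /subsetP /(_ x xE).
        by rewrite inE xu.
      rewrite cardsD (setIidPr tE) cE; apply/eqP; lia.
    by rewrite setUC -{1}(setID E t) (setIidPr tE).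
  - case => B; rewrite inE => /andP [BD /eqP cB] ->.
    have dBt : [disjoint B & t].
      rewrite disjoints_subset; apply: (subset_trans BD).
      by rewrite setCS subsetUl.
    rewrite cardsU; move: (dBt); rewrite -setI_eq0 => /eqP ->; rewrite cards0 subn0 cB.
    rewrite addnC eqxx subsetUr /=.
    rewrite disjoints_subset subUset.
    rewrite disjoints_subset in dtu; rewrite dtu andbT.
    by apply: (subset_trans BD); rewrite setCS subsetUr.
rewrite card_in_imset // => B1 B2; rewrite !inE => /andP [B1D _] /andP [B2D _] e.
have dj : forall B : {set 'I_n}, B \subset D -> B = (B :|: t) :\: t.
  move=> B BD; rewrite setDUl setDv setU0; apply/esym/setDidPl.
  rewrite disjoints_subset; apply: (subset_trans BD); by rewrite setCS subsetUl.
by rewrite (dj _ B1D) (dj _ B2D) e.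
Qed.

Lemma bigmin_le (I : finType) (P : pred I) (F : I -> nat) x j :
  P j -> \big[minn/x]_(i | P i) F i <= F j.
Proof.
move=> Pj.
have : forall s, j \in s -> \big[minn/x]_(i <- s | P i) F i <= F j.
  elim => [//|a s IH]; rewrite big_cons inE => /orP [/eqP ja|js].
    by rewrite -ja Pj geq_minl.
  case: (P a); last exact: IH js.
  exact: leq_trans (geq_minr _ _) (IH js).
by move/(_ (index_enum I)); rewrite mem_index_enum; apply.
Qed.

Lemma minpos_facts n r (H : {set {set 'I_n}}) : 2 <= min_pos_codeg r H ->
  H != set0 /\ forall S : {set 'I_n}, #|S| = r.-1 -> [exists E in H, S \subset E] -> 2 <= codeg H S.
Proof.
rewrite /min_pos_codeg; case: ifP => // /negbT H0 hm; split => // S cS ex.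
apply: leq_trans hm _; apply: bigmin_le; by rewrite cS eqxx ex.
Qed.

Lemma codeg2 n r (H : {set {set 'I_n}}) E v : 0 < r -> uniform r H -> 2 <= min_pos_codeg r H ->
  E \in H -> v \in E -> exists2 u, u \notin E & u |: (E :\ v) \in H.
Proof.
move=> r0 /forallP hu hm EH vE.
have cE : #|E| = r by move: (hu E); rewrite EH => /eqP.
have [_ hc] := minpos_facts hm.
have cS : #|E :\ v| = r.-1 by move: (cardsD1 v E); rewrite vE cE; lia.
have := hc _ cS; rewrite /codeg.
have -> : [exists E0 in H, E :\ v \subset E0] by apply/existsP; exists E; rewrite EH subsetDl.
move=> /(_ isT) c2.
have [F FS FE] : exists2 F, F \in [set E0 in H | E :\ v \subset E0] & F != E.
  case: (boolP [exists F in [set E0 in H | E :\ v \subset E0], F != E]) => [/exists_inP //|/exists_inPn hall].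
  have : [set E0 in H | E :\ v \subset E0] \subset [set E].
    apply/subsetP => F FS; move: (hall F FS); rewrite negbK inE => /eqP ->; by rewrite eqxx.
  by move/subset_leq_card; rewrite cards1; lia.
move: FS; rewrite inE => /andP [FH SF].
have cF : #|F| = r by move: (hu F); rewrite FH => /eqP.
have c1 : #|F :\: (E :\ v)| = 1.
  by rewrite cardsD (setIidPr SF) cF cS; lia.
have [u Fu] := cards1P (introT eqP c1).
have uFS : u \in F :\: (E :\ v) by rewrite Fu set11.
have uS : u \notin E :\ v by move: uFS; rewrite inE => /andP [].
have FeqE : F = u |: (E :\ v).
  by rewrite -{1}(setID F (E :\ v)) (setIidPr SF) Fu setUC.
exists u; last by rewrite -FeqE.
move: uS; rewrite !inE negb_and negbK => /orP [/eqP uv|//].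
by move: FE; rewrite FeqE uv setD1K // eqxx.
Qed.

Definition Sup n (t u : {set 'I_n}) r :=
  [set E : {set 'I_n} | (#|E| == r) && (t \subset E) && [disjoint E & u]].

Lemma card_Sup n (t u : {set 'I_n}) r : [disjoint t & u] -> #|t| <= r ->
  #|Sup t u r| = 'C(n - #|t| - #|u|, r - #|t|).
Proof.
move=> d tr; rewrite -count_sup //; apply: eq_card => E.
by rewrite !inE subnKC.
Qed.

Definition Kern n r (X : {set 'I_n}) :=
  [set E : {set 'I_n} | (#|E| == r) && (2 <= #|E :&: X|)].

Lemma two_elems (T : finType) (A : {set T}) : 2 <= #|A| ->
  exists u1 u2, [/\ u1 \in A, u2 \in A & u1 != u2].
Proof.
move=> cA.
have [u1 u1A] : exists u1, u1 \in A by apply/card_gt0P; lia.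
have [u2 u2A] : exists u2, u2 \in A :\ u1.
  by apply/card_gt0P; move: (cardsD1 u1 A); rewrite u1A; lia.
move: u2A; rewrite !inE => /andP [ne u2A].
by exists u1, u2; split => //; rewrite eq_sym.
Qed.

Lemma kern_codeg n r (X S E : {set 'I_n}) : 3 <= r -> r < n -> #|X| = 3 ->
  E \in Kern r X -> S \subset E -> #|S| = r.-1 -> 2 <= codeg (Kern r X) S.
Proof.
move=> r3 rn cX; rewrite inE => /andP [/eqP cE cEX] SE cS.
have cES : #|E :\: S| = 1 by rewrite cardsD (setIidPr SE) cE cS; lia.
have hSX : 1 <= #|S :&: X|.
  have : E :&: X \subset (S :&: X) :|: (E :\: S).
    apply/subsetP => x; rewrite !inE => /andP [xE xX].
    by case: (x \in S); rewrite ?xX ?xE.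
  move/subset_leq_card; rewrite cardsU cES; lia.
have [A [cA hA]] : exists A : {set 'I_n}, 2 <= #|A| /\
    forall u, u \in A -> u \notin S /\ u |: S \in Kern r X.
  case: (leqP 2 #|S :&: X|) => h.
  - exists (~: S); split; first by rewrite cardsCs setCK card_ord cS; lia.
    move=> u; rewrite inE => uS; split => //; rewrite inE cardsU1 uS cS.
    apply/andP; split; first by apply/eqP; lia.
    apply: leq_trans h _; apply: subset_leq_card; apply: setSI; exact: subsetUr.
  - exists (X :\: S); split; first by rewrite cardsD cX setIC; lia.
    move=> u; rewrite inE => /andP [uS uX]; split => //; rewrite inE cardsU1 uS cS.
    apply/andP; split; first by apply/eqP; lia.
    have : u |: (S :&: X) \subset (u |: S) :&: X.
      apply/subsetP => x; rewrite !inE => /orP [/eqP ->|/andP [-> ->]];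
        by rewrite ?eqxx ?uX ?orbT.
    move/subset_leq_card; rewrite cardsU1 inE (negbTE uS) /= => hh; apply: leq_trans hh; by rewrite add1n ltnS.
have [u1 [u2 [u1A u2A ne]]] := two_elems cA.
have [u1S K1] := hA _ u1A; have [u2S K2] := hA _ u2A.
rewrite /codeg.
have -> : 2 = #|[set u1 |: S; u2 |: S]|.
  rewrite cards2; case: eqP => // e; exfalso.
  have : u1 \in u2 |: S by rewrite -e setU11.
  by rewrite !inE (negbTE u1S) orbF (negbTE ne).
apply: subset_leq_card; apply/subsetP => F /set2P [] ->; rewrite in_set ?K1 ?K2 subsetUr //.
Qed.

Lemma kern_ok n r (X : {set 'I_n}) : 3 <= r -> r < n -> #|X| = 3 ->
  [/\ uniform r (Kern r X), intersecting (Kern r X) & 2 <= min_pos_codeg r (Kern r X)].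
Proof.
move=> r3 rn cX; split.
- by apply/forall_inP => E; rewrite inE => /andP [].
- apply/forall_inP => E; rewrite inE => /andP [_ hE].
  apply/forall_inP => F; rewrite inE => /andP [_ hF].
  apply/negP => /eqP EF.
  have : (E :&: X) :|: (F :&: X) \subset X by rewrite subUset !subsetIr.
  move/subset_leq_card; rewrite cardsU cX.
  have -> : (E :&: X) :&: (F :&: X) = set0.
    by rewrite setIACA setIid EF set0I.
  rewrite cards0; lia.
- have [E0 E0S] : exists E0, E0 \in Sup X set0 r.
    apply/card_gt0P; rewrite card_Sup ?cX ?cards0 ?bin_gt0 ?disjoints_subset ?subsetT //.
      lia.
    by rewrite setC0 subsetT.
  have E0K : E0 \in Kern r X.
    move: E0S; rewrite !inE => /andP [/andP [-> XE] _] /=.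
    by rewrite (setIidPr XE) cX.
  rewrite /min_pos_codeg; case: ifP => [/eqP K0|_]; first by move: E0K; rewrite K0 inE.
  have hc : forall S : {set 'I_n}, (#|S| == r.-1) && [exists E in Kern r X, S \subset E] ->
      2 <= codeg (Kern r X) S.
    move=> S /andP [/eqP cS /exists_inP [E EK SE]]; exact: kern_codeg cX EK SE cS.
  apply: (big_ind (fun m => 2 <= m)) => //.
  + have [v vE] : exists v, v \in E0.
      apply/card_gt0P; move: E0K; rewrite inE => /andP [/eqP -> _]; lia.
    apply: leq_trans (hc (E0 :\ v) _) _.
      apply/andP; split.
        move: E0K; rewrite inE => /andP [/eqP cE _].
        by move: (cardsD1 v E0); rewrite vE cE; move=> h; apply/eqP; lia.
      by apply/exists_inP; exists E0 => //; rewrite subsetDl.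
    by apply: subset_leq_card; apply/subsetP => F; rewrite inE => /andP [].
  + by move=> x y hx hy; rewrite leq_min hx hy.
Qed.
Lemma A3 n r : 3 <= r -> r ^ 4 <= 3 * n ->
  r * (r * (r * 'C(n - 3, r - 3))) < 3 * 'C(n - 3, r - 2).
Proof.
move=> r3 hn.
have h4 : r * (r * (r * r)) <= 3 * n by move: hn; rewrite !expnS expn0 muln1.
have h9 : 9 <= r * r by apply: (@leq_mul 3 3).
have h27 : 27 <= r * (r * r) by rewrite (_ : 27 = 3 * 9) //; apply: leq_mul.
have h81 : 27 * r <= r * (r * (r * r)) by rewrite mulnC; apply: leq_mul.
have rn : r < n by lia.
have e := mul_bin_left (n - 3) (r - 3).
rewrite (_ : (r - 3).+1 = r - 2) in e; last by lia.
have cpos : 0 < 'C(n - 3, r - 3) by rewrite bin_gt0; lia.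
set c := 'C(n - 3, r - 3) in e cpos *; set C2 := 'C(n - 3, r - 2) in e *.
have key : r * (r * r) * (r - 2) < 3 * (n - 3 - (r - 3)).
  nia.
rewrite -(ltn_pmul2l (_ : 0 < r - 2)); last by lia.
have -> : (r - 2) * (3 * C2) = 3 * (n - 3 - (r - 3)) * c by rewrite mulnCA e mulnA.
have -> : (r - 2) * (r * (r * (r * c))) = (r * (r * r) * (r - 2)) * c by nia.
by rewrite ltn_pmul2r.
Qed.

Lemma A2 n r : 3 <= r -> r ^ 4 <= 3 * n ->
  (r - 1) * ((r - 1) * 'C(n - 4, r - 3)) < 'C(n - 3, r - 2).
Proof.
move=> r3 hn.
have h4 : r * (r * (r * r)) <= 3 * n by move: hn; rewrite !expnS expn0 muln1.
have h9 : 9 <= r * r by apply: (@leq_mul 3 3).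
have h27 : 27 <= r * (r * r) by rewrite (_ : 27 = 3 * 9) //; apply: leq_mul.
have h81 : 27 * r <= r * (r * (r * r)) by rewrite mulnC; apply: leq_mul.
have rn : r < n by lia.
have e := mul_bin_diag (n - 3) (r - 3).
rewrite (_ : (r - 3).+1 = r - 2) in e; last by lia.
rewrite (_ : (n - 3).-1 = n - 4) in e; last by lia.
have cpos : 0 < 'C(n - 4, r - 3) by rewrite bin_gt0; lia.
set c := 'C(n - 4, r - 3) in e cpos *; set C2 := 'C(n - 3, r - 2) in e *.
have key : (r - 1) * (r - 1) * (r - 2) < n - 3.
  nia.
rewrite -(ltn_pmul2l (_ : 0 < r - 2)); last by lia.
rewrite -e.
have -> : (r - 2) * ((r - 1) * ((r - 1) * c)) = ((r - 1) * (r - 1) * (r - 2)) * c by nia.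
by rewrite ltn_pmul2r.
Qed.

Lemma card_bigcup_le (I T : finType) (P : pred I) (F : I -> {set T}) :
  #|\bigcup_(i | P i) F i| <= \sum_(i | P i) #|F i|.
Proof.
apply: (big_ind2 (fun (A : {set T}) m => #|A| <= m)) => //; first by rewrite cards0.
move=> A1 m1 A2 m2 h1 h2; rewrite cardsU; apply: leq_trans (leq_subr _ _) _.
exact: leq_add.
Qed.

Lemma cardsU_le (T : finType) (A B : {set T}) : #|A :|: B| <= #|A| + #|B|.
Proof. by rewrite cardsU leq_subr. Qed.

Lemma cardsU_disj (T : finType) (A B : {set T}) : A :&: B = set0 -> #|A :|: B| = #|A| + #|B|.
Proof. by move=> h; rewrite cardsU h cards0 subn0. Qed.

Lemma inSup n (t u E : {set 'I_n}) r : E \in Sup t u r ->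
  [/\ #|E| = r, t \subset E & forall x, x \in u -> x \notin E].
Proof.
rewrite inE => /andP [/andP [/eqP -> tE]]; rewrite disjoints_subset => /subsetP dE.
split => // x xu; apply/negP => xE; move: (dE x xE); by rewrite inE xu.
Qed.

Lemma Sup_in n (t u E : {set 'I_n}) r : #|E| = r -> t \subset E ->
  (forall x, x \in u -> x \notin E) -> E \in Sup t u r.
Proof.
move=> cE tE hu; rewrite inE cE eqxx tE /= disjoints_subset.
by apply/subsetP => x xE; rewrite inE; apply/negP => xu; move: (hu x xu); rewrite xE.
Qed.

Lemma cards3 (T : finType) (x y z : T) : x != y -> x != z -> y != z -> #|[set x; y; z]| = 3.
Proof.
move=> xy xz yz; rewrite -setUA cardsU1 cards2 yz !inE negb_or xy xz.
by [].
Qed.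

Lemma two_in (T : finType) (E X : {set T}) x y : x != y -> x \in E -> y \in E ->
  x \in X -> y \in X -> 2 <= #|E :&: X|.
Proof.
move=> xy xE yE xX yX; rewrite -(eqP (_ : #|[set x; y]| == 2)); last by rewrite cards2 xy.
by apply: subset_leq_card; apply/subsetP => z /set2P [] ->; rewrite inE ?xE ?yE ?xX ?yX.
Qed.

Lemma sub2 (T : finType) (E : {set T}) x y : x \in E -> y \in E -> [set x; y] \subset E.
Proof. by move=> xE yE; apply/subsetP => z /set2P [] ->. Qed.

Lemma sub3 (T : finType) (E : {set T}) x y z : x \in E -> y \in E -> z \in E ->
  [set x; y; z] \subset E.
Proof. by move=> xE yE zE; apply/subsetP => w; rewrite !inE => /orP [/orP [] | ] /eqP ->. Qed.

Lemma sum_le_const (I : finType) (A : pred I) (F : I -> nat) c :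
  (forall i, i \in A -> F i <= c) -> \sum_(i in A) F i <= #|A| * c.
Proof. by move=> h; rewrite -sum_nat_const; apply: leq_sum. Qed.

Section Main.
Variables (n r : nat) (H : {set {set 'I_n}}).
Hypotheses (r3 : 3 <= r) (hn : r ^ 4 <= 3 * n) (hu : uniform r H)
  (hi : intersecting H) (hc : 2 <= min_pos_codeg r H)
  (hmax : forall H' : {set {set 'I_n}},
     uniform r H' -> intersecting H' -> 2 <= min_pos_codeg r H' -> #|H'| <= #|H|).

Lemma rn : r < n.
Proof.
have h4 : r * (r * (r * r)) <= 3 * n by move: hn; rewrite !expnS expn0 muln1.
have h9 : 9 <= r * r by apply: (@leq_mul 3 3).
have h27 : 27 <= r * (r * r) by rewrite (_ : 27 = 3 * 9) //; apply: leq_mul.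
have h81 : 27 * r <= r * (r * (r * r)) by rewrite mulnC; apply: leq_mul.
lia.
Qed.

Lemma cardH E : E \in H -> #|E| = r.
Proof. by move=> EH; move/forallP: hu => /(_ E); rewrite EH => /eqP. Qed.

Lemma meetH E F : E \in H -> F \in H -> exists2 x, x \in E & x \in F.
Proof.
move=> EH FH; move/forall_inP: hi => /(_ E EH) /forall_inP /(_ F FH) /set0Pn [x].
by rewrite inE => /andP [] ? ?; exists x.
Qed.

Lemma Hne : exists E, E \in H.
Proof. by have [/set0Pn h _] := minpos_facts hc. Qed.

Lemma cod2 E v : E \in H -> v \in E -> exists2 u, u \notin E & u |: (E :\ v) \in H.
Proof. by move=> EH vE; apply: (codeg2 _ hu hc EH vE); lia. Qed.

Lemma nocover1 a : exists2 E, E \in H & a \notin E.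
Proof.
have [E EH] := Hne.
case: (boolP (a \in E)) => aE; last by exists E.
have [u uE uH] := cod2 EH aE; exists (u |: (E :\ a)) => //.
rewrite !inE eqxx /= orbF; apply/negP => /eqP ua; by move: uE; rewrite -ua aE.
Qed.

Lemma Kle (X : {set 'I_n}) : #|X| = 3 -> #|Kern r X| <= #|H|.
Proof. move=> cX; have [? ? ?] := kern_ok r3 rn cX; exact: hmax. Qed.

Lemma Klow (a b c : 'I_n) : a != b -> a != c -> b != c ->
  #|Sup [set a; b] set0 r| + 2 * 'C(n - 3, r - 2) <= #|Kern r [set a; b; c]|.
Proof.
move=> ab ac bc.
set S := Sup [set a; b] set0 r; set T1 := Sup [set a; c] [set b] r;
  set T2 := Sup [set b; c] [set a] r.
have cT : forall x y z : 'I_n, x != y -> x != z -> y != z -> #|Sup [set x; y] [set z] r| = 'C(n - 3, r - 2).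
  move=> x y z xy xz yz; rewrite card_Sup ?cards2 ?cards1 ?xy.
  - by rewrite (_ : n - 2 - 1 = n - 3) //; lia.
  - rewrite disjoints_subset; apply/subsetP => w /set2P [] ->; rewrite !inE.
      by rewrite xz. by rewrite yz.
  - lia.
have -> : 2 * 'C(n - 3, r - 2) = #|T1| + #|T2| by rewrite /T1 /T2 !cT ?(eq_sym c) ?(eq_sym b a) //; lia.
have d1 : T1 :&: T2 = set0.
  apply/eqP; rewrite -subset0; apply/subsetP => E; rewrite inE => /andP [/inSup [_ s1 _] /inSup [_ _ d2]].
  by move: (d2 a (set11 a)); rewrite (subsetP s1) // !inE eqxx.
have d2 : S :&: (T1 :|: T2) = set0.
  apply/eqP; rewrite -subset0; apply/subsetP => E; rewrite in_setI in_setU => /andP [/inSup [_ s1 _] /orP [] /inSup [_ _ d]].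
    by move: (d b (set11 b)); rewrite (subsetP s1) // !inE eqxx orbT.
  by move: (d a (set11 a)); rewrite (subsetP s1) // !inE eqxx.
rewrite -cardsU_disj // -cardsU_disj //.
apply: subset_leq_card; apply/subsetP => E; rewrite !in_setU => /or3P [] /inSup [cE s _];
  rewrite inE cE eqxx /=.
- apply: (two_in ab); rewrite ?(subsetP s) ?inE ?eqxx ?orbT //.
- apply: (two_in ac); rewrite ?(subsetP s) ?inE ?eqxx ?orbT //.
- apply: (two_in bc); rewrite ?(subsetP s) ?inE ?eqxx ?orbT //.
Qed.


Lemma Sup_sub (t u : {set 'I_n}) : Sup t u r \subset Sup t set0 r.
Proof.
apply/subsetP => E /inSup [cE tE _]; apply: Sup_in => // x; by rewrite inE.
Qed.

Lemma cSup2 (x y z : 'I_n) : x != y -> x != z -> y != z ->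
  #|Sup [set x; y] [set z] r| = 'C(n - 3, r - 2).
Proof.
move=> xy xz yz; rewrite card_Sup ?cards2 ?cards1 ?xy.
- by rewrite (_ : n - 2 - 1 = n - 3) //; lia.
- rewrite disjoints_subset; apply/subsetP => w /set2P [] ->; rewrite !inE.
    by rewrite xz. by rewrite yz.
- lia.
Qed.

Lemma three_v : exists a b c : 'I_n, [/\ a != b, a != c & b != c].
Proof.
have h0 : 0 < n by have := rn; lia.
have h1 : 1 < n by have := rn; lia.
have h2 : 2 < n by have := rn; lia.
by exists (Ordinal h0), (Ordinal h1), (Ordinal h2).
Qed.

Lemma third (a b : 'I_n) : exists c, (c != a) && (c != b).
Proof.
have : 0 < #|~: [set a; b]|.
  rewrite cardsCs setCK card_ord; have := leq_card_setU [set a] [set b].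
  rewrite cards1; have := rn; move=> h1 h2.
  have : #|[set a; b]| <= 2 by rewrite cards2; case: (a != b).
  lia.
case/card_gt0P => c; rewrite !inE negb_or => h; by exists c.
Qed.

Lemma tau3_false : (forall a b : 'I_n, a != b ->
  exists2 E, E \in H & (a \notin E) && (b \notin E)) -> False.
Proof.
move=> nc.
have [E1 E1H] := Hne.
pose Ex x := odflt set0 [pick E in H | x \notin E].
have ExP : forall x, Ex x \in H /\ x \notin Ex x.
  move=> x; rewrite /Ex; case: pickP => [E /andP [EH xE] | none] //=.
  have [E EH xE] := nocover1 x; by move: (none E); rewrite EH xE.
pose Exy x y := odflt set0 [pick E in H | (x \notin E) && (y \notin E)].
have ExyP : forall x y, x != y -> [/\ Exy x y \in H, x \notin Exy x y & y \notin Exy x y].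
  move=> x y xy; rewrite /Exy; case: pickP => [E /and3P [EH xE yE] | none] //=.
  have [E EH /andP [xE yE]] := nc x y xy; by move: (none E); rewrite EH xE yE.
pose U := \bigcup_(x in E1) \bigcup_(y in Ex x) \bigcup_(z in Exy x y) Sup [set x; y; z] set0 r.
have HU : H \subset U.
  apply/subsetP => F FH.
  have [x xF xE1] := meetH FH E1H.
  have [ExH xEx] := ExP x.
  have [y yF yEx] := meetH FH ExH.
  have xy : x != y by apply/eqP => e; move: xEx; rewrite {1}e yEx.
  have [ExyH xExy yExy] := ExyP x y xy.
  have [z zF zExy] := meetH FH ExyH.
  apply/bigcupP; exists x => //; apply/bigcupP; exists y => //; apply/bigcupP; exists z => //.
  by apply: Sup_in; [exact: cardH | exact: sub3 | move=> w; rewrite inE].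
have cU : #|U| <= r * (r * (r * 'C(n - 3, r - 3))).
  apply: leq_trans (card_bigcup_le _ _) _.
  apply: (leq_trans (sum_le_const (c := r * (r * 'C(n - 3, r - 3))) _)); last by rewrite (cardH E1H).
  move=> x xE1; have [ExH xEx] := ExP x.
  apply: leq_trans (card_bigcup_le _ _) _.
  apply: (leq_trans (sum_le_const (c := r * 'C(n - 3, r - 3)) _)); last by rewrite (cardH ExH).
  move=> y yEx.
  have xy : x != y by apply/eqP => e; move: xEx; rewrite {1}e yEx.
  have [ExyH xExy yExy] := ExyP x y xy.
  apply: leq_trans (card_bigcup_le _ _) _.
  apply: (leq_trans (sum_le_const (c := 'C(n - 3, r - 3)) _)); last by rewrite (cardH ExyH).
  move=> z zExy.
  have xz : x != z by apply/eqP => e; move: xExy; rewrite {1}e zExy.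
  have yz : y != z by apply/eqP => e; move: yExy; rewrite {1}e zExy.
  rewrite card_Sup ?cards3 ?cards0 ?subn0 //.
    by rewrite disjoints_subset setC0 subsetT.
have [a [b [c [ab ac bc]]]] := three_v.
have h1 := Klow ab ac bc; have h2 := Kle (cards3 ab ac bc).
have h3 := subset_leq_card HU; have h4 := @A3 n r r3 hn.
have h5 := subset_leq_card (Sup_sub [set a; b] [set c]); rewrite cSup2 // in h5.
have h6 : 3 * 'C(n - 3, r - 2) <= #|Kern r [set a; b; c]|.
  apply: leq_trans h1; rewrite (_ : 3 = 1 + 2) // mulnDl mul1n; exact: leq_add.
have := leq_trans (leq_ltn_trans (leq_trans h3 cU) h4) h6.
by rewrite ltnNge h2.
Qed.

Lemma flip (a b : 'I_n) : (forall E, E \in H -> (a \in E) || (b \in E)) ->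
  forall E, E \in H -> a \in E -> b \notin E -> b |: (E :\ a) \in H.
Proof.
move=> cov E EH aE bE.
have [u uE uH] := cod2 EH aE.
have au : (a == u) = false by apply/negP => /eqP e; move: uE; rewrite -e aE.
move: (cov _ uH); rewrite !inE eqxx au (negbTE bE) /= !andbF !orbF.
by move=> /eqP ->.
Qed.

Lemma HA_bound (a b : 'I_n) : a != b -> (forall E, E \in H -> (a \in E) || (b \in E)) ->
  (forall c, c != a -> c != b -> exists2 E, E \in H & [&& a \in E, b \notin E & c \notin E]) ->
  #|[set E in H | (a \in E) && (b \notin E)]| <= (r - 1) * ((r - 1) * 'C(n - 4, r - 3)).
Proof.
move=> ab cov ns.
have [c /andP [ca cb]] := third a b.
have [E1 E1H /and3P [aE1 bE1 _]] := ns c ca cb.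
pose Ex x := odflt set0 [pick E in H | [&& a \in E, b \notin E & x \notin E]].
have ExP : forall x, x != a -> x != b -> [/\ Ex x \in H, a \in Ex x, b \notin Ex x & x \notin Ex x].
  move=> x xa xb; rewrite /Ex; case: pickP => [E /and4P [EH aE bE xE] | none] //=.
  have [E EH /and3P [aE bE xE]] := ns x xa xb; by move: (none E); rewrite EH aE bE xE.
pose U := \bigcup_(x in E1 :\ a) \bigcup_(y in Ex x :\ a) Sup [set a; x; y] [set b] r.
have HU : [set E in H | (a \in E) && (b \notin E)] \subset U.
  apply/subsetP => F; rewrite inE => /and3P [FH aF bF].
  have [x xF xG] := meetH FH (flip cov E1H aE1 bE1).
  have xb : x != b by apply/eqP => e; move: bF; rewrite -e xF.
  have xE1 : x \in E1 :\ a by move: xG; rewrite in_setU1 (negbTE xb).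
  have xa : x != a by move: xE1; rewrite in_setD1 => /andP [].
  have [ExH aEx bEx xEx] := ExP x xa xb.
  have [y yF yG] := meetH FH (flip cov ExH aEx bEx).
  have yb : y != b by apply/eqP => e; move: bF; rewrite -e yF.
  have yEx : y \in Ex x :\ a by move: yG; rewrite in_setU1 (negbTE yb).
  apply/bigcupP; exists x => //; apply/bigcupP; exists y => //.
  apply: Sup_in; [exact: cardH | exact: sub3 | move=> w; rewrite inE => /eqP ->; exact: bF].
apply: leq_trans (subset_leq_card HU) _.
have cD : forall E : {set 'I_n}, E \in H -> a \in E -> #|E :\ a| = r - 1.
  move=> E EH aE; move: (cardsD1 a E); rewrite aE (cardH EH) => ->; by rewrite /= subn1.
apply: leq_trans (card_bigcup_le _ _) _.
apply: (leq_trans (sum_le_const (c := (r - 1) * 'C(n - 4, r - 3)) _)); last by rewrite (cD _ E1H aE1).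
move=> x xE1.
have xa : x != a by move: xE1; rewrite in_setD1 => /andP [].
have xb : x != b by apply/eqP => e; move: xE1; rewrite in_setD1 e (negbTE bE1) andbF.
have [ExH aEx bEx xEx] := ExP x xa xb.
apply: leq_trans (card_bigcup_le _ _) _.
apply: (leq_trans (sum_le_const (c := 'C(n - 4, r - 3)) _)); last by rewrite (cD _ ExH aEx).
move=> y yEx.
have ya : y != a by move: yEx; rewrite in_setD1 => /andP [].
have yEx' : y \in Ex x by move: yEx; rewrite in_setD1 => /andP [].
have yb : y != b by apply/eqP => e; move: bEx; rewrite -e yEx'.
have xy : x != y by apply/eqP => e; move: xEx; rewrite {1}e yEx'.
have ax : a != x by rewrite eq_sym.
have ay : a != y by rewrite eq_sym.
rewrite card_Sup ?cards3 ?cards1 //.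
- by rewrite -subnDA.
- rewrite disjoints_subset; apply/subsetP => w; rewrite !inE => /orP [/orP []|] /eqP ->.
  + done.
  + done.
  + done.
Qed.

Theorem main_sec : kernel_system r 2 H.
Proof.
case: (boolP [exists a, exists b, (a != b) && [forall E in H, (a \in E) || (b \in E)]])
  => [/existsP [a /existsP [b /andP [ab /forall_inP cov]]] | nc]; last first.
  exfalso; apply: tau3_false => a b ab.
  move: nc; rewrite negb_exists => /forallP /(_ a); rewrite negb_exists => /forallP /(_ b).
  rewrite ab /= negb_forall_in => /exists_inP [E EH]; rewrite negb_or => h; by exists E.
have cov' : forall E, E \in H -> (b \in E) || (a \in E) by move=> E /cov; rewrite orbC.
have ba : b != a by rewrite eq_sym.
case: (boolP [exists c, (c != a) && (c != b) &&
   [forall E in H, (a \in E) ==> (b \in E) || (c \in E)]])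
  => [/existsP [c /andP [/andP [ca cb] /forall_inP st]] | ns].
- have ac : a != c by rewrite eq_sym.
  have bc : b != c by rewrite eq_sym.
  have aX : a \in [set a; b; c] by rewrite !inE eqxx.
  have bX : b \in [set a; b; c] by rewrite !inE eqxx ?orbT.
  have cX : c \in [set a; b; c] by rewrite !inE eqxx ?orbT.
  have HK : H \subset Kern r [set a; b; c].
    apply/subsetP => E EH; rewrite inE (cardH EH) eqxx /=.
    case/orP: (cov E EH) => [aE|bE].
    + case: (boolP (b \in E)) => bE; first exact: (two_in ab aE bE aX bX).
      have cE : c \in E by move: (st E EH); rewrite aE (negbTE bE).
      exact: (two_in ac aE cE aX cX).
    + case: (boolP (a \in E)) => aE; first exact: (two_in ab aE bE aX bX).
      have E'H := flip cov' EH bE aE.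
      have := st _ E'H; rewrite !inE !eqxx (negbTE ba) (negbTE ca) /= => /andP [_ cE]; exact: (two_in bc bE cE bX cX).
  have Kl := Kle (cards3 ab ac bc).
  exists [set a; b; c]; split; first by rewrite cards3.
  by apply/eqP; rewrite eqEcard HK Kl.
- exfalso.
  have ns_ab : forall c, c != a -> c != b ->
      exists2 E, E \in H & [&& a \in E, b \notin E & c \notin E].
    move=> c ca cb; move: ns; rewrite negb_exists => /forallP /(_ c).
    rewrite ca cb /= negb_forall_in => /exists_inP [E EH].
    by rewrite negb_imply negb_or => /andP [aE /andP [bE cE]]; exists E; rewrite ?aE ?bE ?cE.
  have ns_ba : forall c, c != b -> c != a ->
      exists2 E, E \in H & [&& b \in E, a \notin E & c \notin E].
    move=> c cb ca; have [E EH /and3P [aE bE cE]] := ns_ab c ca cb.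
    have E'H := flip cov EH aE bE; exists (b |: (E :\ a)); first exact: E'H.
    by rewrite !inE !eqxx (negbTE ab) (negbTE cb) (negbTE cE) /= ?andbF.
  have hA := HA_bound ab cov ns_ab.
  have hB := HA_bound ba cov' ns_ba.
  have [c /andP [ca cb]] := third a b.
  have ac : a != c by rewrite eq_sym.
  have bc : b != c by rewrite eq_sym.
  have hK := Klow ab ac bc.
  have hKle := Kle (cards3 ab ac bc).
  have h2 := @A2 n r r3 hn.
  set S := Sup [set a; b] set0 r in hK.
  set HA := [set E in H | (a \in E) && (b \notin E)] in hA.
  set HB := [set E in H | (b \in E) && (a \notin E)] in hB.
  have HS : H \subset S :|: (HA :|: HB).
    apply/subsetP => E EH; rewrite !in_setU.
    case: (boolP (a \in E)) => aE; case: (boolP (b \in E)) => bE.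
    + by rewrite Sup_in ?(cardH EH) ?sub2 // => w; rewrite inE.
    + by apply/orP; right; apply/orP; left; rewrite /HA inE EH aE bE.
    + by apply/orP; right; apply/orP; right; rewrite /HB inE EH aE bE.
    + by move: (cov E EH); rewrite (negbTE aE) (negbTE bE).
  have hH := leq_trans (subset_leq_card HS) (leq_trans (cardsU_le _ _) (leq_add (leqnn _) (cardsU_le _ _))).
  have : #|H| < #|Kern r [set a; b; c]|.
    apply: leq_trans hK; apply: leq_ltn_trans hH _.
    rewrite ltn_add2l mul2n -addnn -addSn; exact: leq_add (leq_ltn_trans hA h2) (ltnW (leq_ltn_trans hB h2)).
  by rewrite ltnNge hKle.
Qed.

End Main.

Unset Implicit Arguments.

Theorem proposition6 (r n : nat) (H : {set {set 'I_n}}) :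
  3 <= r -> r ^ 4 <= 3 * n ->
  uniform r H -> intersecting H -> 2 <= min_pos_codeg r H ->
  (forall H' : {set {set 'I_n}},
     uniform r H' -> intersecting H' -> 2 <= min_pos_codeg r H' ->
     #|H'| <= #|H|) ->
  kernel_system r 2 H.
Proof.
move=> r3 hn hu hi hc hmax; exact: (main_sec r3 hn hu hi hc hmax).
Qed.
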